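(* There exists an aperiodic probability $F\in\mathbb{P}(\mathbb{Z}^+)$ with $\sum_{k\ge0}kF(k)=+\infty$ and $\lim_{\xi\to0}|\mathrm{Arg}(1-\widehat{F}(\xi))|=\pi/2$. Consequently there is no $\theta\in(0,\pi/2)$ such that $\phi_F(w)\in\mathbb{D}\cup\{1\}$ and $1-\phi_F(w)\in\overline{\Lambda}_\theta$ for all $w\in\overline{\mathbb{D}}$, and $F\notin\mathcal{A}$.
   Context: $\mathbb{P}(\mathbb{Z}^+)$ is the set of functions $F:\mathbb{Z}\to[0,1]$ with $\sum F=1$ and $F(k)=0$ for $k<0$. $F$ is adapted if $\mathrm{supp}(F)$ generates the group $\mathbb{Z}$, aperiodic if every translate $\delta_m*F$ ($m\in\mathbb{Z}$) is adapted. $\widehat{F}(\xi)=\sum_kF(k)e^{-ik\xi}$, $\phi_F(w)=\sum_{k\ge0}F(k)w^k$ for $w\in\overline{\mathbb{D}}=\{|w|\le1\}$, $\mathbb{D}=\{|w|<1\}$, $\mathrm{Arg}$ is the principal argument, $\overline{\Lambda}_\theta=\{0\}\cup\{z:|\mathrm{Arg}\,z|\le\theta\}$. $\mathcal{A}=\{F\in\mathbb{P}(\mathbb{Z}^+):\sup_{n\in\mathbb{N}}n\sum_k|F^{(n)}(k)-F^{(n+1)}(k)|<\infty\}$, $F^{(n)}$ the $n$-th convolution power. *)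

(* Defs.v *)
From Stdlib Require Import Reals ZArith List.
From Coquelicot Require Import Coquelicot.
Open Scope R_scope.

(* F ∈ P(Z^+): values in [0,1], vanishing on negative integers, total mass 1.
   Since F vanishes on negative integers, sum over Z = sum over k >= 0. *)
Definition in_PZplus (F : Z -> R) : Prop :=
  (forall k, 0 <= F k <= 1) /\
  (forall k, (k < 0)%Z -> F k = 0) /\
  is_series (fun n : nat => F (Z.of_nat n)) 1.

Definition supp (F : Z -> R) (k : Z) : Prop := F k <> 0.

Definition generates_Z (S : Z -> Prop) : Prop :=
  forall n : Z, exists l : list (Z * Z),
    List.Forall (fun p => S (fst p)) l /\
    n = fold_right (fun p acc => (snd p * fst p + acc)%Z) 0%Z l.

Definition adapted (F : Z -> R) : Prop := generates_Z (supp F).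

(* delta_m * F is the translate k |-> F (k - m). *)
Definition translate (m : Z) (F : Z -> R) : Z -> R := fun k => F (k - m)%Z.

Definition aperiodic (F : Z -> R) : Prop :=
  forall m : Z, adapted (translate m F).

(* Fourier transform  F^(xi) = sum_k F(k) e^{-i k xi}  (F supported on Z^+). *)
Definition Fhat (F : Z -> R) (xi : R) : C :=
  (Series (fun k : nat => F (Z.of_nat k) * cos (INR k * xi)),
   - Series (fun k : nat => F (Z.of_nat k) * sin (INR k * xi))).

Definition phiF (F : Z -> R) (w : C) : C :=
  (Series (fun k : nat => F (Z.of_nat k) * Re (Cpow w k)),
   Series (fun k : nat => F (Z.of_nat k) * Im (Cpow w k))).

(* Principal argument, with values in (-PI, PI]; Arg 0 := 0. *)
Definition Arg (z : C) : R :=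
  let x := Re z in let y := Im z in
  match Rlt_dec 0 x with
  | left _ => atan (y / x)
  | right _ =>
    match Rlt_dec x 0 with
    | left _ => match Rle_dec 0 y with
                | left _ => atan (y / x) + PI
                | right _ => atan (y / x) - PI
                end
    | right _ => match Rlt_dec 0 y with
                 | left _ => PI / 2
                 | right _ => match Rlt_dec y 0 with
                              | left _ => - (PI / 2)
                              | right _ => 0
                              end
                 end
    end
  end.

Definition Lambda_bar (theta : R) (z : C) : Prop :=
  z = 0%C \/ Rabs (Arg z) <= theta.

(* Convolution powers F^(n) for F supported on Z^+ (then F^(n) is supported on
   Z^+ and the convolution sum over Z reduces to a finite sum). *)
Fixpoint convpow (F : Z -> R) (n : nat) : Z -> R :=
  match n with
  | O => fun k => if Z.eqb k 0 then 1 else 0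
  | S m => fun k =>
      match k with
      | Z.neg _ => 0
      | _ => sum_f_R0 (fun j : nat => F (Z.of_nat j) * convpow F m (k - Z.of_nat j)%Z)
                      (Z.to_nat k)
      end
  end.

(* The class A: sup_n n * sum_k |F^(n)(k) - F^(n+1)(k)| < +oo.
   (F^(n), F^(n+1) vanish on negative k; the series of nonnegative terms is
   bounded iff all its partial sums are.) *)
Definition in_A (F : Z -> R) : Prop :=
  in_PZplus F /\
  exists M : R, forall (n N : nat),
    INR n * sum_f_R0 (fun k : nat =>
        Rabs (convpow F n (Z.of_nat k) - convpow F (S n) (Z.of_nat k))) N <= M.

(* Main.v *)
Require Import Defs.
From Stdlib Require Import Reals ZArith List Lra Lia.
From Coquelicot Require Import Coquelicot.
Open Scope R_scope.

Definition F0 (k : Z) : R := if Z.ltb 0 k then / (IZR k * (IZR k + 1)) else 0.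
Definition f (n : nat) : R := F0 (Z.of_nat n).

Lemma f_0 : f 0 = 0.
Proof. reflexivity. Qed.

Lemma f_S n : f (S n) = / (INR (S n) * (INR (S n) + 1)).
Proof.
  unfold f, F0. replace (Z.ltb 0 (Z.of_nat (S n))) with true by (symmetry; apply Z.ltb_lt; lia).
  rewrite <- INR_IZR_INZ. reflexivity.
Qed.

Lemma f_nonneg n : 0 <= f n.
Proof.
  destruct n. rewrite f_0; lra. rewrite f_S.
  pose proof (pos_INR n). rewrite S_INR. apply Rlt_le, Rinv_0_lt_compat. nra.
Qed.

Lemma f_le n : f n <= / 2.
Proof.
  destruct n. rewrite f_0; lra. rewrite f_S.
  pose proof (pos_INR n). rewrite S_INR. apply Rinv_le_contravar; nra.
Qed.

Lemma sum_f n : sum_f_R0 f n = 1 - / (INR n + 1).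
Proof.
  induction n. simpl. rewrite f_0. lra.
  simpl sum_f_R0. rewrite IHn, f_S. rewrite S_INR. pose proof (pos_INR n). field. lra.
Qed.

Lemma is_series_f : is_series f 1.
Proof.
  apply is_series_Reals. intros eps Heps.
  destruct (INR_unbounded (/ eps)) as [N HN]. exists N. intros n Hn.
  unfold Rdist. rewrite sum_f.
  assert (INR N <= INR n) by (apply le_INR; lia).
  pose proof (pos_INR N).
  assert (/ eps < INR n + 1) by lra.
  assert (0 < INR n + 1) by lra.
  replace (1 - / (INR n + 1) - 1) with (- / (INR n + 1)) by ring.
  rewrite Rabs_Ropp, Rabs_pos_eq by (apply Rlt_le, Rinv_0_lt_compat; lra).
  rewrite <- (Rinv_inv eps). apply Rinv_lt_contravar. apply Rmult_lt_0_compat; auto. apply Rinv_0_lt_compat; lra. auto.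
Qed.

Lemma in_PZplus_F0 : in_PZplus F0.
Proof.
  split; [|split].
  - intro k. unfold F0. destruct (Z.ltb_spec 0 k). 2: lra.
    assert (1 <= IZR k) by (apply IZR_le; lia).
    split. apply Rlt_le, Rinv_0_lt_compat; nra.
    rewrite <- Rinv_1. apply Rinv_le_contravar; nra.
  - intros k Hk. unfold F0. destruct (Z.ltb_spec 0 k). lia. reflexivity.
  - exact is_series_f.
Qed.

Lemma aperiodic_F0 : aperiodic F0.
Proof.
  intros m n. exists ((m+2, n) :: (m+1, -n) :: nil)%Z. split.
  - repeat constructor; simpl; unfold supp, translate, F0.
    + replace (m + 2 - m)%Z with 2%Z by lia. simpl. lra.
    + replace (m + 1 - m)%Z with 1%Z by lia. simpl. lra.
  - simpl. lia.
Qed.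

Definition h (n : nat) : R := INR n * f n.

Lemma h_S n : h (S n) = / (INR n + 2).
Proof. unfold h. rewrite f_S, S_INR. pose proof (pos_INR n). field. lra. Qed.

Lemma ln_step n : ln (INR n + 3) - ln (INR n + 2) <= / (INR n + 2).
Proof.
  pose proof (pos_INR n).
  rewrite <- ln_div by lra.
  replace ((INR n + 3) / (INR n + 2)) with (1 + / (INR n + 2)) by (field; lra).
  rewrite <- (ln_exp (/ (INR n + 2))) at 2.
  apply ln_le. apply Rlt_le_trans with 1. lra.
  assert (0 < / (INR n + 2)) by (apply Rinv_0_lt_compat; lra). lra.
  apply exp_ineq1_le.
Qed.

Lemma sum_h_ge n : ln (INR n + 2) - ln 2 <= sum_f_R0 h n.
Proof.
  induction n. simpl. unfold h. rewrite f_0. replace (0+2) with 2 by ring. lra.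
  simpl sum_f_R0. rewrite h_S. pose proof (ln_step n). rewrite S_INR.
  replace (INR n + 1 + 2) with (INR n + 3) by ring. lra.
Qed.

Lemma sum_h_mono n m : (n <= m)%nat -> sum_f_R0 h n <= sum_f_R0 h m.
Proof.
  induction 1 as [|m0 Hm IH]. lra. simpl. rewrite h_S. pose proof (pos_INR m0).
  assert (0 < / (INR m0 + 2)) by (apply Rinv_0_lt_compat; lra). lra.
Qed.

Lemma sum_h_unbounded K : exists N, forall n, (N <= n)%nat -> K <= sum_f_R0 h n.
Proof.
  destruct (INR_unbounded (exp (K + ln 2))) as [N HN]. exists N. intros n Hn.
  apply Rle_trans with (sum_f_R0 h N). 2: now apply sum_h_mono.
  eapply Rle_trans. 2: apply sum_h_ge.
  assert (K + ln 2 <= ln (INR N + 2)). rewrite <- (ln_exp (K + ln 2)) at 1.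
  apply ln_le. apply exp_pos. lra. lra.
Qed.

Lemma mean_F0 : is_lim_seq (sum_n (fun k : nat => INR k * F0 (Z.of_nat k))) p_infty.
Proof.
  apply is_lim_seq_spec. intro K. destruct (sum_h_unbounded (K+1)) as [N HN].
  exists N. intros n Hn. rewrite sum_n_Reals. specialize (HN n Hn). unfold h, f in HN. lra.
Qed.
Lemma Rabs_le_inv' x a : Rabs x <= a -> - a <= x <= a.
Proof. intros H. pose proof (Rle_abs x). pose proof (Rle_abs (-x)). rewrite Rabs_Ropp in *. lra. Qed.

Lemma lim_le (g : nat -> R) l s e : is_series g l ->
  (exists N0, forall N, (N0 <= N)%nat -> Rabs (sum_f_R0 g N - s) <= e) -> Rabs (l - s) <= e.
Proof.
  intros Hg [N0 HN]. apply is_series_Reals in Hg.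
  apply Rle_plus_epsilon. intros eps Heps. destruct (Hg eps Heps) as [N1 HN1].
  specialize (HN (max N0 N1) ltac:(lia)). specialize (HN1 (max N0 N1) ltac:(lia)).
  unfold Rdist in HN1.
  replace (l - s) with ((sum_f_R0 g (max N0 N1) - s) - (sum_f_R0 g (max N0 N1) - l)) by ring.
  eapply Rle_trans. apply Rabs_triang. rewrite Rabs_Ropp. lra.
Qed.

Lemma lim_ge (g : nat -> R) l s : is_series g l ->
  (exists N0, forall N, (N0 <= N)%nat -> s <= sum_f_R0 g N) -> s <= l.
Proof.
  intros Hg [N0 HN]. apply is_series_Reals in Hg.
  apply Rle_plus_epsilon. intros eps Heps. destruct (Hg eps Heps) as [N1 HN1].
  specialize (HN (max N0 N1) ltac:(lia)). specialize (HN1 (max N0 N1) ltac:(lia)).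
  unfold Rdist in HN1. apply Rabs_def2 in HN1. lra.
Qed.

Lemma tail_gen (g : nat -> R) c M : 0 <= c -> (forall n, Rabs (g n) <= c * f n) ->
  forall d, Rabs (sum_f_R0 g (M + d) - sum_f_R0 g M) <= c * (/ (INR M + 1) - / (INR (M + d) + 1)).
Proof.
  intros Hc Hg d. induction d.
  - rewrite Nat.add_0_r. replace (_ - _) with 0 by ring. rewrite Rabs_R0. lra.
  - replace (M + S d)%nat with (S (M + d)) by lia. simpl sum_f_R0.
    replace (sum_f_R0 g (M + d) + g (S (M + d)) - sum_f_R0 g M) with
      ((sum_f_R0 g (M + d) - sum_f_R0 g M) + g (S (M+d))) by ring.
    eapply Rle_trans. apply Rabs_triang.
    specialize (Hg (S (M+d))). rewrite f_S in Hg.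
    replace (/ (INR (S (M + d)) + 1)) with (/ (INR (M + d) + 1) - / (INR (S (M + d)) * (INR (S (M + d)) + 1))).
    lra. rewrite S_INR. pose proof (pos_INR (M+d)). field. lra.
Qed.

Lemma tail_bound (g : nat -> R) l c M : 0 <= c -> (forall n, Rabs (g n) <= c * f n) ->
  is_series g l -> Rabs (l - sum_f_R0 g M) <= c * / (INR M + 1).
Proof.
  intros Hc Hg Hs. apply (lim_le g). exact Hs. exists M. intros N HN.
  replace N with (M + (N - M))%nat by lia.
  pose proof (tail_gen g c M Hc Hg (N - M)) as T.
  assert (0 <= / (INR (M + (N - M)) + 1)). { pose proof (pos_INR (M + (N - M))).
  apply Rlt_le, Rinv_0_lt_compat. lra. } nra.
Qed.

Lemma ex_series_dom (g : nat -> R) c : (forall n, Rabs (g n) <= c * f n) -> ex_series g.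
Proof.
  intros Hg. apply (@ex_series_le R_AbsRing R_CompleteNormedModule g (fun n => c * f n)).
  intro n. apply Hg. exists (c * 1). apply (is_series_scal c f 1). exact is_series_f.
Qed.

Definition Cs xi := Series (fun n => f n * cos (INR n * xi)).
Definition Ss xi := Series (fun n => f n * sin (INR n * xi)).
Definition Rr xi := 1 - Cs xi.

Lemma is_Cs xi : is_series (fun n => f n * cos (INR n * xi)) (Cs xi).
Proof.
  apply Series_correct. apply ex_series_dom with 1. intro n.
  rewrite Rabs_mult, (Rabs_pos_eq (f n)) by apply f_nonneg.
  pose proof (f_nonneg n). pose proof (COS_bound (INR n * xi)).
  assert (Rabs (cos (INR n * xi)) <= 1) by (apply Rabs_le; lra). nra.
Qed.

Lemma is_Ss xi : is_series (fun n => f n * sin (INR n * xi)) (Ss xi).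
Proof.
  apply Series_correct. apply ex_series_dom with 1. intro n.
  rewrite Rabs_mult, (Rabs_pos_eq (f n)) by apply f_nonneg.
  pose proof (f_nonneg n). pose proof (SIN_bound (INR n * xi)).
  assert (Rabs (sin (INR n * xi)) <= 1) by (apply Rabs_le; lra). nra.
Qed.

Lemma is_Rr xi : is_series (fun n => f n * (1 - cos (INR n * xi))) (Rr xi).
Proof.
  eapply is_series_ext. 2: apply (is_series_minus _ _ _ _ is_series_f (is_Cs xi)).
  intro n. simpl. unfold plus, opp. simpl. ring.
Qed.

Lemma one_minus_cos a : 0 <= a <= 2 -> 1 - cos a <= a ^ 2 / 2.
Proof.
  intros. destruct (pre_cos_bound a 0) as [H1 _]; try lra.
  replace (cos_approx a (2 * 0 + 1)) with (1 - a^2/2) in H1. lra.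
  unfold cos_approx, cos_term. simpl. field.
Qed.

Lemma sin_lower a : 0 <= a <= 1 -> 5/6 * a <= sin a.
Proof.
  intros. destruct (pre_sin_bound a 0) as [H1 _]; try lra.
  replace (sin_approx a (2 * 0 + 1)) with (a - a^3/6) in H1. nra.
  unfold sin_approx, sin_term. simpl. field.
Qed.

Lemma split_pt xi : 0 < xi < 1 -> exists M : nat,
  INR M * xi <= 1 /\ / (INR M + 1) <= xi /\ / xi - 1 <= INR M.
Proof.
  intros Hx. destruct (archimed (/ xi)) as [H1 H2].
  assert (1 < / xi). { rewrite <- Rinv_1. apply Rinv_lt_contravar; lra. }
  assert (1 <= up (/ xi))%Z. { apply le_IZR. lra. }
  exists (Z.to_nat (up (/ xi)) - 1)%nat.
  assert (E : INR (Z.to_nat (up (/ xi)) - 1) = IZR (up (/ xi)) - 1).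
  { rewrite minus_INR by lia. rewrite INR_IZR_INZ, Z2Nat.id by lia. simpl. ring. }
  rewrite E. split; [|split].
  - assert (IZR (up (/ xi)) - 1 <= / xi) by lra.
    apply Rmult_le_compat_r with (r := xi) in H3. 2: lra. rewrite Rinv_l in H3; lra.
  - replace (IZR (up (/ xi)) - 1 + 1) with (IZR (up (/ xi))) by ring.
    rewrite <- (Rinv_inv xi) at 2. apply Rinv_le_contravar. apply Rinv_0_lt_compat; lra. lra.
  - lra.
Qed.

Lemma core K : exists d, 0 < d /\ forall xi, 0 < xi < d ->
  0 < Rr xi /\ Rr xi <= 1/4 /\ K * Rr xi <= Ss xi.
Proof.
  set (K' := Rmax K 0).
  destruct (sum_h_unbounded (4 * K' + 2)) as [N0 HN0].
  exists (Rmin (1/12) (/ (INR N0 + 1))). split.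
  { apply Rmin_pos. lra. apply Rinv_0_lt_compat. pose proof (pos_INR N0). lra. }
  intros xi [Hx0 Hx1].
  assert (Hxa : xi < 1/12) by (eapply Rlt_le_trans; [exact Hx1| apply Rmin_l]).
  assert (Hxb : xi < / (INR N0 + 1)) by (eapply Rlt_le_trans; [exact Hx1| apply Rmin_r]).
  destruct (split_pt xi) as [M [HM1 [HM2 HM3]]]. lra.
  assert (HMN : (N0 <= M)%nat).
  { apply INR_le. assert (INR N0 + 1 < / xi).
    { rewrite <- (Rinv_inv (INR N0 + 1)). apply Rinv_lt_contravar.
      apply Rmult_lt_0_compat. lra. apply Rinv_0_lt_compat; pose proof (pos_INR N0); lra. lra. }
    lra. }
  assert (HMpos : 0 <= INR M) by apply pos_INR.
  assert (Hterm : forall n, (n <= M)%nat -> 0 <= INR n * xi <= 1).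
  { intros n Hn. assert (INR n <= INR M) by (apply le_INR; lia). pose proof (pos_INR n). nra. }
  assert (HRhead : sum_f_R0 (fun n => f n * (1 - cos (INR n * xi))) M <= (xi ^ 2 / 2) * INR (S M)).
  { rewrite <- sum_cte. apply sum_Rle. intros n Hn. specialize (Hterm n Hn).
    pose proof (one_minus_cos (INR n * xi) ltac:(lra)).
    destruct n. rewrite f_0. nra. rewrite f_S.
    pose proof (pos_INR n). rewrite S_INR in *.
    assert (0 <= / ((INR n + 1) * (INR n + 1 + 1))) by (apply Rlt_le, Rinv_0_lt_compat; nra).
    apply Rle_trans with (/ ((INR n + 1) * (INR n + 1 + 1)) * ((INR n + 1) * xi) ^ 2 / 2).
    nra. replace (/ ((INR n + 1) * (INR n + 1 + 1)) * ((INR n + 1) * xi) ^ 2 / 2)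
      with ((INR n + 1) / (INR n + 2) * (xi ^2 / 2)) by (field; lra).
    assert ((INR n + 1) / (INR n + 2) <= 1). { apply Rmult_le_reg_r with (INR n + 2). lra.
      unfold Rdiv. rewrite Rmult_assoc, Rinv_l by lra. lra. }
    assert (0 <= xi ^ 2 / 2) by nra. nra. }
  assert (HRtail : Rabs (Rr xi - sum_f_R0 (fun n => f n * (1 - cos (INR n * xi))) M) <= 2 * / (INR M + 1)).
  { apply tail_bound. lra. intro n. rewrite Rabs_mult, (Rabs_pos_eq (f n)) by apply f_nonneg.
     pose proof (f_nonneg n); pose proof (COS_bound (INR n * xi)).
     assert (Rabs (1 - cos (INR n * xi)) <= 2) by (apply Rabs_le; lra). nra. apply is_Rr. }
  rewrite S_INR in HRhead.
  assert (HRle : Rr xi <= 3 * xi).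
  { apply Rabs_le_inv' in HRtail. nra. }
  assert (HRpos : 0 < Rr xi).
  { apply Rlt_le_trans with (sum_f_R0 (fun n => f n * (1 - cos (INR n * xi))) 1).
    - simpl. rewrite f_0, f_S. simpl.
      replace (cos (1 * xi)) with (1 - 2 * sin (xi/2) * sin (xi/2)) by (rewrite <- cos_2a_sin; f_equal; field).
      assert (0 < sin (xi/2)) by (apply sin_gt_0; pose proof PI2_1; lra). nra.
    - apply (lim_ge _ _ _ (is_Rr xi)). exists 1%nat. intros N HN.
      replace N with (1 + (N - 1))%nat by lia. generalize (N - 1)%nat. intro d. induction d.
      rewrite Nat.add_0_r. lra. replace (1 + S d)%nat with (S (1 + d)) by lia. rewrite (tech5 _ (1 + d)).
      pose proof (f_nonneg (S (1 + d))). pose proof (COS_bound (INR (S (1 + d)) * xi)). nra. }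
  assert (HIhead : 5/6 * xi * sum_f_R0 h M <= sum_f_R0 (fun n => f n * sin (INR n * xi)) M).
  { rewrite scal_sum. apply sum_Rle. intros n Hn. specialize (Hterm n Hn).
    pose proof (sin_lower _ Hterm). unfold h. pose proof (f_nonneg n). nra. }
  assert (HItail : Rabs (Ss xi - sum_f_R0 (fun n => f n * sin (INR n * xi)) M) <= 1 * / (INR M + 1)).
  { apply tail_bound. lra. intro n. rewrite Rabs_mult, (Rabs_pos_eq (f n)) by apply f_nonneg.
     pose proof (f_nonneg n); pose proof (SIN_bound (INR n * xi)).
     assert (Rabs (sin (INR n * xi)) <= 1) by (apply Rabs_le; lra). nra. apply is_Ss. }
  assert (HIge : xi * (5/6 * sum_f_R0 h M - 1) <= Ss xi).
  { apply Rabs_le_inv' in HItail. lra. }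
  specialize (HN0 M HMN).
  assert (HK' : K <= K' /\ 0 <= K') by (split; [apply Rmax_l | apply Rmax_r]).
  split; [|split]. exact HRpos. lra.
  apply Rle_trans with (K' * Rr xi). nra.
  apply Rle_trans with (K' * (3 * xi)). nra. nra.
Qed.

Lemma Arg_pos (z : C) : 0 < Re z -> Arg z = atan (Im z / Re z).
Proof. intros H. unfold Arg. destruct (Rlt_dec 0 (Re z)). reflexivity. lra. Qed.

Lemma Arg_0 : Arg 0%C = 0.
Proof. unfold Arg. simpl. destruct (Rlt_dec 0 0). lra. destruct (Rlt_dec 0 0). lra.
  destruct (Rlt_dec 0 0). lra. destruct (Rlt_dec 0 0). lra. reflexivity. Qed.

Lemma Fhat_eq xi : Fhat F0 xi = (Cs xi, - Ss xi).
Proof. reflexivity. Qed.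

Lemma one_minus_Fhat xi : (1 - Fhat F0 xi)%C = (Rr xi, Ss xi).
Proof. rewrite Fhat_eq. unfold Rr. apply injective_projections; simpl; ring. Qed.

Lemma Cs_neg xi : Cs (- xi) = Cs xi.
Proof. unfold Cs. apply Series_ext. intro n. replace (INR n * - xi) with (- (INR n * xi)) by ring.
  rewrite cos_neg. reflexivity. Qed.

Lemma Ss_neg xi : Ss (- xi) = - Ss xi.
Proof. unfold Ss. rewrite <- Series_opp. apply Series_ext. intro n.
  replace (INR n * - xi) with (- (INR n * xi)) by ring. rewrite sin_neg. ring. Qed.

Lemma Rr_neg xi : Rr (- xi) = Rr xi.
Proof. unfold Rr. rewrite Cs_neg. reflexivity. Qed.

Lemma atan_nonneg t : 0 <= t -> 0 <= atan t.
Proof. intros H. destruct (Req_dec t 0). subst. rewrite atan_0. lra.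
  rewrite <- atan_0. left. apply atan_increasing. lra. Qed.

Lemma item4 : is_lim (fun xi => Rabs (Arg ((1 - Fhat F0 xi)%C))) 0 (PI / 2).
Proof.
  apply is_lim_spec. intro eps. simpl.
  set (e' := Rmin (eps / 2) (PI / 4)).
  assert (He' : 0 < e' <= eps / 2 /\ e' <= PI / 4).
  { unfold e'. split; [split|]. apply Rmin_pos. destruct eps; simpl; lra. pose proof PI4_RGT_0; lra.
    apply Rmin_l. apply Rmin_r. }
  pose proof (cond_pos eps) as Heps. pose proof PI4_RLT_PI2.
  set (K := tan (PI / 2 - e')).
  assert (HK : atan K = PI / 2 - e'). { unfold K. apply atan_tan. pose proof PI2_RGT_0. lra. }
  assert (HK0 : 0 < K). { unfold K. apply tan_gt_0; lra. }
  destruct (core K) as [d [Hd Hcore]].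
  assert (Good : forall a, 0 < a < d -> Rabs (atan (Ss a / Rr a) - PI / 2) < eps /\ 0 <= Ss a / Rr a).
  { intros a Ha. destruct (Hcore a Ha) as [H1 [H2 H3]].
    assert (K <= Ss a / Rr a). { apply Rmult_le_reg_r with (Rr a). auto.
      unfold Rdiv. rewrite Rmult_assoc, Rinv_l by lra. lra. }
    split. 2: lra.
    assert (atan K <= atan (Ss a / Rr a)). { destruct (Req_dec K (Ss a / Rr a)) as [HE|HE]. rewrite HE; lra.
      left. apply atan_increasing. lra. }
    pose proof (atan_bound (Ss a / Rr a)).
    rewrite Rabs_left1 by lra. lra. }
  exists (mkposreal d Hd). intros y Hy Hy0.
  change (Rabs (y - 0) < d) in Hy. rewrite Rminus_0_r in Hy.
  rewrite one_minus_Fhat.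
  destruct (Rle_lt_dec 0 y) as [Hpos|Hneg].
  - assert (0 < y < d). { rewrite Rabs_pos_eq in Hy by lra. lra. }
    destruct (Good y H0) as [G1 G2]. destruct (Hcore y H0) as [H1 _].
    rewrite Arg_pos by (simpl; lra). simpl. rewrite (Rabs_pos_eq (atan _)) by (apply atan_nonneg; auto). auto.
  - assert (0 < - y < d). { rewrite Rabs_left in Hy by lra. lra. }
    destruct (Good (-y) H0) as [G1 G2]. destruct (Hcore (-y) H0) as [H1 _].
    rewrite Rr_neg in H1, G1, G2. rewrite Ss_neg in G1, G2.
    rewrite Arg_pos by (simpl; lra). simpl.
    replace (Ss y / Rr y) with (- (- Ss y / Rr y)) by (field; lra).
    rewrite atan_opp, Rabs_Ropp, (Rabs_pos_eq (atan _)) by (apply atan_nonneg; auto). auto.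
Qed.

Lemma Cpow_unit xi k : Cpow (cos xi, - sin xi) k = (cos (INR k * xi), - sin (INR k * xi)).
Proof.
  induction k.
  - simpl. rewrite Rmult_0_l, cos_0, sin_0. apply injective_projections; simpl; ring.
  - simpl Cpow. rewrite IHk. rewrite S_INR.
    replace ((INR k + 1) * xi) with (INR k * xi + xi) by ring. rewrite cos_plus, sin_plus.
    apply injective_projections; simpl; ring.
Qed.

Lemma phiF_unit xi : phiF F0 (cos xi, - sin xi) = Fhat F0 xi.
Proof.
  unfold phiF. rewrite Fhat_eq. apply injective_projections; simpl.
  - apply Series_ext. intro n. rewrite Cpow_unit. reflexivity.
  - unfold Ss. rewrite <- Series_opp. apply Series_ext. intro n. rewrite Cpow_unit. simpl.
    change (F0 (Z.of_nat n)) with (f n). ring.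
Qed.

Lemma Cmod_unit xi : Cmod (cos xi, - sin xi) = 1.
Proof.
  unfold Cmod. simpl. replace (cos xi * (cos xi * 1) + - sin xi * (- sin xi * 1)) with
    (sin xi ^ 2 + cos xi ^ 2) by ring. rewrite <- !Rsqr_pow2, sin2_cos2. apply sqrt_1.
Qed.

Lemma item5 : ~ (exists theta : R, 0 < theta < PI / 2 /\
         forall w : C, Cmod w <= 1 ->
           (Cmod (phiF F0 w) < 1 \/ phiF F0 w = 1%C) /\
           Lambda_bar theta ((1 - phiF F0 w)%C)).
Proof.
  intros [theta [Ht Hw]].
  pose proof item4 as L. apply is_lim_spec in L.
  specialize (L (mkposreal (PI/2 - theta) ltac:(simpl; lra))).
  simpl in L. destruct L as [d Hd].
  pose proof (cond_pos d) as Hd0.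
  set (xi := d / 2).
  assert (Hxi : Rabs (Rabs (Arg (1 - Fhat F0 xi)) - PI / 2) < PI / 2 - theta).
  { apply Hd. change (Rabs (xi - 0) < d). unfold xi. rewrite Rminus_0_r, Rabs_pos_eq; lra.
    unfold xi. lra. }
  destruct (Hw (cos xi, - sin xi)) as [_ HL]. rewrite Cmod_unit; lra.
  rewrite phiF_unit in HL. destruct HL as [HL|HL].
  - rewrite HL, Arg_0, Rabs_R0 in Hxi. apply Rabs_def2 in Hxi. lra.
  - apply Rabs_def2 in Hxi. lra.
Qed.

Definition cc (n k : nat) : R := convpow F0 n (Z.of_nat k).

Lemma cc_S n k : cc (S n) k = sum_f_R0 (fun j => f j * cc n (k - j)) k.
Proof.
  unfold cc.
  assert (Hm : forall z, (0 <= z)%Z -> convpow F0 (S n) z =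
     sum_f_R0 (fun j : nat => F0 (Z.of_nat j) * convpow F0 n (z - Z.of_nat j)%Z) (Z.to_nat z)).
  { intros z Hz. destruct z; try lia; reflexivity. }
  rewrite Hm by lia. rewrite Nat2Z.id. apply sum_eq. intros j Hj.
  rewrite Nat2Z.inj_sub by lia. reflexivity.
Qed.

Lemma cc_0 k : cc 0 k = if Nat.eqb k 0 then 1 else 0.
Proof. unfold cc. simpl. destruct k; reflexivity. Qed.

Lemma ex_abs_dom (g b : nat -> R) : (forall n, Rabs (g n) <= b n) -> ex_series b ->
  ex_series (fun n => Rabs (g n)).
Proof.
  intros H Hb. apply (@ex_series_le R_AbsRing R_CompleteNormedModule _ b); auto.
  intro n. change (Rabs (Rabs (g n)) <= b n). rewrite Rabs_Rabsolu. auto.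
Qed.

Lemma sum_split_mult (a : nat -> R) c k :
  sum_f_R0 a k * c = sum_f_R0 (fun j => a j * c) k.
Proof. rewrite Rmult_comm, scal_sum. reflexivity. Qed.

Section Conv.
Variable xi : R.
Definition zz : C := (Cs xi, - Ss xi).

Lemma abs_cos_le x y : Rabs (x * cos y) <= Rabs x.
Proof. rewrite Rabs_mult. pose proof (Rabs_pos x). pose proof (COS_bound y).
  assert (Rabs (cos y) <= 1) by (apply Rabs_le; lra). nra. Qed.
Lemma abs_sin_le x y : Rabs (x * sin y) <= Rabs x.
Proof. rewrite Rabs_mult. pose proof (Rabs_pos x). pose proof (SIN_bound y).
  assert (Rabs (sin y) <= 1) by (apply Rabs_le; lra). nra. Qed.

Lemma conv_props n :
  (forall k, 0 <= cc n k) /\ is_series (cc n) 1 /\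
  is_series (fun k => cc n k * cos (INR k * xi)) (Re (Cpow zz n)) /\
  is_series (fun k => cc n k * sin (INR k * xi)) (- Im (Cpow zz n)).
Proof.
  induction n as [|n [Hpos [Hs [Hc Hsn]]]].
  - assert (E : forall (g : nat -> R) N, sum_f_R0 (fun k => cc 0 k * g k) N = g 0%nat).
    { intros g N. induction N. simpl. rewrite cc_0. simpl. ring.
      simpl. rewrite IHN, cc_0. simpl. ring. }
    assert (E' : forall (g : nat -> R), is_series (fun k => cc 0 k * g k) (g 0%nat)).
    { intro g. apply is_series_Reals. intros eps Heps. exists 0%nat. intros N _.
      unfold Rdist. rewrite E. replace (g 0%nat - g 0%nat) with 0 by ring. rewrite Rabs_R0. lra. }
    split; [|split; [|split]].
    + intro k. rewrite cc_0. destruct (Nat.eqb k 0); lra.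
    + eapply is_series_ext. 2: apply (E' (fun _ => 1)). intro k. simpl. ring.
    + replace (Re (Cpow (zz) 0)) with ((fun k => cos (INR k * xi)) 0%nat)
        by (simpl; rewrite Rmult_0_l, cos_0; reflexivity).
      apply (E' (fun k => cos (INR k * xi))).
    + replace (- Im (Cpow (zz) 0)) with ((fun k => sin (INR k * xi)) 0%nat)
        by (simpl; rewrite Rmult_0_l, sin_0; ring).
      apply (E' (fun k => sin (INR k * xi))).
  - assert (Hf : ex_series (fun k => Rabs (f k))).
    { apply ex_abs_dom with f. intro k. rewrite Rabs_pos_eq by apply f_nonneg. lra.
      exists 1. apply is_series_f. }
    assert (Hcn : ex_series (fun k => Rabs (cc n k))).
    { apply ex_abs_dom with (cc n). intro k. rewrite Rabs_pos_eq by apply Hpos. lra.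
      exists 1. auto. }
    assert (Hfc : ex_series (fun k => Rabs (f k * cos (INR k * xi)))).
    { apply ex_abs_dom with f. intro k. eapply Rle_trans. apply abs_cos_le.
      rewrite Rabs_pos_eq by apply f_nonneg. lra. exists 1. apply is_series_f. }
    assert (Hfs : ex_series (fun k => Rabs (f k * sin (INR k * xi)))).
    { apply ex_abs_dom with f. intro k. eapply Rle_trans. apply abs_sin_le.
      rewrite Rabs_pos_eq by apply f_nonneg. lra. exists 1. apply is_series_f. }
    assert (Hcc : ex_series (fun k => Rabs (cc n k * cos (INR k * xi)))).
    { apply ex_abs_dom with (cc n). intro k. eapply Rle_trans. apply abs_cos_le.
      rewrite Rabs_pos_eq by apply Hpos. lra. exists 1. auto. }
    assert (Hcs : ex_series (fun k => Rabs (cc n k * sin (INR k * xi)))).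
    { apply ex_abs_dom with (cc n). intro k. eapply Rle_trans. apply abs_sin_le.
      rewrite Rabs_pos_eq by apply Hpos. lra. exists 1. auto. }
    pose proof (is_Cs xi) as HC. pose proof (is_Ss xi) as HS.
    split; [|split; [|split]].
    + intro k. rewrite cc_S. apply cond_pos_sum. intro j.
      pose proof (f_nonneg j). pose proof (Hpos (k - j)%nat). nra.
    + pose proof (is_series_mult _ _ _ _ is_series_f Hs Hf Hcn) as P.
      eapply is_series_ext. 2: { replace 1 with (1 * 1) by ring. exact P. }
      intro k. rewrite cc_S. reflexivity.
    + pose proof (is_series_mult _ _ _ _ HC Hc Hfc Hcc) as Q1.
      pose proof (is_series_mult _ _ _ _ HS Hsn Hfs Hcs) as Q2.
      pose proof (is_series_minus _ _ _ _ Q1 Q2) as Q.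
      replace (Re (Cpow zz (S n))) with (plus (Cs xi * Re (Cpow zz n)) (opp (Ss xi * - Im (Cpow zz n))))
        by (simpl; unfold plus, opp, Re, Im; simpl; ring).
      refine (is_series_ext _ _ _ _ Q).
      intro k. simpl. unfold plus, opp. simpl. rewrite cc_S, sum_split_mult.
      match goal with |- ?a + - ?b = _ => change (a + - b) with (a - b) end.
      rewrite <- (minus_sum (fun j => (f j * cos (INR j * xi)) * (cc n (k - j) * cos (INR (k - j) * xi)))
         (fun j => (f j * sin (INR j * xi)) * (cc n (k - j) * sin (INR (k - j) * xi)))). apply sum_eq. intros j Hj.
      replace (INR k * xi) with (INR j * xi + INR (k - j) * xi) by (rewrite minus_INR by lia; ring).
      rewrite cos_plus. ring.
    + pose proof (is_series_mult _ _ _ _ HS Hc Hfs Hcc) as Q1.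
      pose proof (is_series_mult _ _ _ _ HC Hsn Hfc Hcs) as Q2.
      pose proof (is_series_plus _ _ _ _ Q1 Q2) as Q.
      replace (- Im (Cpow zz (S n))) with (plus (Ss xi * Re (Cpow zz n)) (Cs xi * - Im (Cpow zz n)))
        by (simpl; unfold plus, Re, Im; simpl; ring).
      refine (is_series_ext _ _ _ _ Q).
      intro k. simpl. unfold plus. simpl. rewrite cc_S, sum_split_mult.
      rewrite <- (sum_plus (fun j => (f j * sin (INR j * xi)) * (cc n (k - j) * cos (INR (k - j) * xi)))
         (fun j => (f j * cos (INR j * xi)) * (cc n (k - j) * sin (INR (k - j) * xi)))). apply sum_eq. intros j Hj.
      replace (INR k * xi) with (INR j * xi + INR (k - j) * xi) by (rewrite minus_INR by lia; ring).
      rewrite sin_plus. ring.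
Qed.
End Conv.

Lemma im_le_Cmod (c : C) : Rabs (Im c) <= Cmod c.
Proof.
  pose proof (Cmod2_alt c). pose proof (Cmod_ge_0 c). pose proof (Rabs_pos (Im c)).
  rewrite <- (pow2_abs (Im c)) in H. nra.
Qed.

Lemma sqrt2_le_2 : sqrt 2 <= 2.
Proof.
  rewrite <- (sqrt_square 2) at 2 by lra. apply sqrt_le_1_alt. lra.
Qed.

Lemma bernoulli n x : 0 <= x <= 1 -> 1 - INR n * x <= (1 - x) ^ n.
Proof.
  intros Hx. induction n. simpl. lra.
  rewrite S_INR. simpl. pose proof (pos_INR n). nra.
Qed.

Lemma diff_bound (Mb : R) (n : nat) (u v : nat -> R) (trig : nat -> R) (lu lv : R) :
  (0 < INR n) -> (forall k, Rabs (trig k) <= 1) ->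
  (forall N, INR n * sum_f_R0 (fun k => Rabs (u k - v k)) N <= Mb) ->
  is_series (fun k => u k * trig k) lu -> is_series (fun k => v k * trig k) lv ->
  Rabs (lu - lv) <= Mb / INR n.
Proof.
  intros Hn Ht HM Hu Hv.
  pose proof (is_series_minus _ _ _ _ Hu Hv) as Q.
  replace (lu - lv) with (plus lu (opp lv) - 0) by (unfold plus, opp; simpl; ring).
  apply (lim_le _ _ _ _ Q). exists 0%nat. intros N _. rewrite Rminus_0_r.
  eapply Rle_trans. apply sum_f_R0_triangle.
  apply Rle_trans with (sum_f_R0 (fun k => Rabs (u k - v k)) N).
  - apply sum_Rle. intros k _. unfold plus, opp. simpl.
    replace (u k * trig k + - (v k * trig k)) with ((u k - v k) * trig k) by ring.
    rewrite Rabs_mult. pose proof (Ht k). pose proof (Rabs_pos (u k - v k)). nra.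
  - specialize (HM N). apply Rmult_le_reg_l with (INR n). auto.
    unfold Rdiv. rewrite <- Rmult_assoc, (Rmult_comm (INR n) Mb), Rmult_assoc, Rinv_r by lra. lra.
Qed.

Lemma item6 : ~ in_A F0.
Proof.
  intros [_ [Mb HM]].
  set (K := 16 * (Rabs Mb + 1)).
  destruct (core K) as [d [Hd Hcore]].
  set (xi := d / 2).
  destruct (Hcore xi) as [HR0 [HR1 HKR]]. unfold xi; lra.
  destruct (split_pt (2 * Rr xi)) as [n [Hn1 [_ Hn3]]]. lra.
  assert (Hinv : 2 <= / (2 * Rr xi)).
  { replace 2 with (/ (/ 2)) at 1 by field. apply Rinv_le_contravar. lra. lra. }
  assert (HnR : 1/4 <= INR n * Rr xi).
  { assert (INR n * (2 * Rr xi) >= (/ (2 * Rr xi) - 1) * (2 * Rr xi)) by nra.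
    rewrite Rmult_minus_distr_r, Rinv_l in H by lra. nra. }
  assert (Hnpos : 0 < INR n) by nra.
  pose proof (conv_props xi n) as [_ [_ [Hc1 Hs1]]].
  pose proof (conv_props xi (S n)) as [_ [_ [Hc2 Hs2]]].
  assert (HMn : forall N, INR n * sum_f_R0 (fun k => Rabs (cc n k - cc (S n) k)) N <= Mb).
  { intro N. apply HM. }
  assert (B1 := diff_bound Mb n _ _ _ _ _ Hnpos (fun k => ltac:(apply Rabs_le; apply COS_bound)) HMn Hc1 Hc2).
  assert (B2 := diff_bound Mb n _ _ _ _ _ Hnpos (fun k => ltac:(apply Rabs_le; apply SIN_bound)) HMn Hs1 Hs2).
  set (z := zz xi) in *.
  assert (HC : Cmod (Cpow z n - Cpow z (S n)) <= 2 * (Mb / INR n)).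
  { eapply Rle_trans. apply Cmod_2Rmax.
    assert (E1 : fst (Cpow z n - Cpow z (S n))%C = Re (Cpow z n) - Re (Cpow z (S n))) by reflexivity.
    assert (E2 : snd (Cpow z n - Cpow z (S n))%C = - (- Im (Cpow z n) - - Im (Cpow z (S n)))).
    { unfold Im. simpl. ring. }
    rewrite E1, E2, Rabs_Ropp. pose proof sqrt2_le_2.
    assert (0 <= Rmax (Rabs (Re (z ^ n) - Re (z ^ S n))) (Rabs (- Im (z ^ n) - - Im (z ^ S n)))).
    { eapply Rle_trans. apply Rabs_pos. apply Rmax_l. }
    assert (Rmax (Rabs (Re (z ^ n) - Re (z ^ S n))) (Rabs (- Im (z ^ n) - - Im (z ^ S n))) <= Mb / INR n).
    { apply Rmax_lub; auto. }
    pose proof (sqrt_pos 2). nra. }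
  assert (Hfac : (Cpow z n - Cpow z (S n) = Cpow z n * (1 - z))%C).
  { simpl. ring. }
  rewrite Hfac, Cmod_mult, Cmod_pow in HC.
  assert (Hz : 1 - Rr xi <= Cmod z).
  { eapply Rle_trans. 2: apply re_le_Cmod. unfold z, zz, Re. simpl. unfold Rr. 
    rewrite Rabs_pos_eq; unfold Rr in HR1; lra. }
  assert (H1z : Ss xi <= Cmod (1 - z)).
  { eapply Rle_trans. 2: apply im_le_Cmod. unfold z, zz, Im. simpl.
    replace (0 + - - Ss xi) with (Ss xi) by ring. apply Rle_abs. }
  assert (Hpow : (1 - Rr xi) ^ n <= Cmod z ^ n).
  { apply pow_incr. lra. }
  pose proof (bernoulli n (Rr xi) ltac:(lra)) as Hb.
  assert (HK0 : 0 < K) by (unfold K; pose proof (Rabs_pos Mb); lra).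
  assert (Hss : 0 <= Ss xi) by nra.
  assert (1/2 * Ss xi <= 2 * (Mb / INR n)).
  { apply Rle_trans with (Cmod z ^ n * Cmod (1 - z)); auto.
    pose proof (pow_le (Cmod z) n (Cmod_ge_0 z)). nra. }
  assert (INR n * (1/2 * Ss xi) <= 2 * Mb).
  { apply Rmult_le_compat_l with (r := INR n) in H. 2: lra.
    replace (INR n * (2 * (Mb / INR n))) with (2 * Mb) in H by (field; lra). auto. }
  assert (K / 8 <= INR n * (1/2 * Ss xi)) by nra.
  unfold K in H1. pose proof (Rle_abs Mb). lra.
Qed.

Theorem theorem6p2 :
  exists F : Z -> R,
    in_PZplus F /\ aperiodic F /\
    is_lim_seq (sum_n (fun k : nat => INR k * F (Z.of_nat k))) p_infty /\
    is_lim (fun xi => Rabs (Arg ((1 - Fhat F xi)%C))) 0 (PI / 2) /\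
    ~ (exists theta : R, 0 < theta < PI / 2 /\
         forall w : C, Cmod w <= 1 ->
           (Cmod (phiF F w) < 1 \/ phiF F w = 1%C) /\
           Lambda_bar theta ((1 - phiF F w)%C)) /\
    ~ in_A F.
Proof.
  exists F0. split. exact in_PZplus_F0. split. exact aperiodic_F0. split. exact mean_F0.
  split. exact item4. split. exact item5. exact item6.
Qed.
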